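(* Consider two simple totally unimodular matrices $$A_1=\begin{pmatrix}B&0\\ b^t&1\end{pmatrix},\qquad A_2=\begin{pmatrix}c^t&1\\ C&0\end{pmatrix},$$ where $B\in M_{g_1,n_1}(\mathbb{Z})$, $C\in M_{g_2,n_2}(\mathbb{Z})$ and $b,c$ are integer vectors, and assume that $\overline{Q_i}$ is well-suited for $A_i$ for $i=1,2$. Then one can write $$\overline{Q_1}=\begin{pmatrix}Q_1&r_1\\ r_1^t&1\end{pmatrix},\qquad \overline{Q_2}=\begin{pmatrix}1&r_2^t\\ r_2&Q_2\end{pmatrix}$$ with $Q_i\in M_{g_i,g_i}(\mathbb{R})$ and $r_i\in\mathbb{R}^{g_i}$, and $$\overline{Q}:=\begin{pmatrix}Q_1&r_1&r_1r_2^t\\ r_1^t&1&r_2^t\\ r_2r_1^t&r_2&Q_2\end{pmatrix}\ \text{ is well-suited for }\ A=\begin{pmatrix}B&0&0\\ b^t&c^t&1\\ 0&C&0\end{pmatrix}.$$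
   Context: A real matrix is totally unimodular if every square submatrix has determinant $-1,0$ or $1$; it is simple if it has no zero column and no two proportional columns. For a simple totally unimodular $A\in M_{g,n}(\mathbb{Z})$, a symmetric matrix $Q\in M_{g,g}(\mathbb{R})$ is well-suited for $A$ if $Q$ is positive definite and for every $\xi\in\mathbb{Z}^g\setminus\{0\}$ one has $\xi^tQ\xi\ge1$, with equality if and only if $\xi$ or $-\xi$ is a column vector of $A$. *)

(* Defs.v *)
From HB Require Import structures.
From mathcomp Require Import all_boot all_order all_algebra.
From mathcomp Require Import reals.
Set Implicit Arguments. Unset Strict Implicit. Unset Printing Implicit Defensive.
Import Order.TTheory GRing.Theory Num.Theory.
Local Open Scope ring_scope.

Definition totally_unimodular (g n : nat) (A : 'M[int]_(g, n)) : Prop :=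
  forall (k : nat) (f : 'I_k -> 'I_g) (h : 'I_k -> 'I_n),
    injective f -> injective h -> \det (mxsub f h A) \in [:: -1; 0; 1].

Definition simple_mx (g n : nat) (A : 'M[int]_(g, n)) : Prop :=
  (forall j : 'I_n, col j A != 0) /\
  (forall i j : 'I_n, i != j ->
     ~ exists lam : rat,
         map_mx (fun z : int => z%:~R : rat) (col i A)
         = lam *: map_mx (fun z : int => z%:~R : rat) (col j A)).

Definition qform (R : realType) (g : nat) (Q : 'M[R]_g) (x : 'cV[R]_g) : R :=
  (x^T *m Q *m x) 0 0.

Definition int_to_real (R : realType) (g : nat) (xi : 'cV[int]_g) : 'cV[R]_g :=
  map_mx (fun z : int => z%:~R) xi.

Definition well_suited (R : realType) (g n : nat) (Q : 'M[R]_g) (A : 'M[int]_(g, n)) : Prop :=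
  Q^T = Q /\
  (forall x : 'cV[R]_g, x != 0 -> 0 < qform Q x) /\
  (forall xi : 'cV[int]_g, xi != 0 ->
     1 <= qform Q (int_to_real R xi) /\
     (qform Q (int_to_real R xi) = 1 <->
        exists j : 'I_n, xi = col j A \/ - xi = col j A)).

(* Main.v *)
Require Import Defs.
From HB Require Import structures.
From mathcomp Require Import all_boot all_order all_algebra.
From mathcomp Require Import reals.
From mathcomp Require Import ring lra.
Import Order.TTheory GRing.Theory Num.Theory.
Set Implicit Arguments. Unset Strict Implicit.
Local Open Scope ring_scope.

Section Aux.
Variable R : realType.

Definition dot (n : nat) (u v : 'cV[R]_n) : R := (u^T *m v) 0 0.

Lemma mx11_mul m (X : 'M[R]_(1,m)) (Y : 'M[R]_(m,1)) (Z : 'M[R]_(1,1)) :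
  (X *m Y *m Z) 0 0 = (X *m Y) 0 0 * Z 0 0.
Proof. by rewrite [in LHS]mxE big_ord1. Qed.

Lemma dotC n (u v : 'cV[R]_n) : dot u v = dot v u.
Proof. by rewrite /dot -(trmxK (v^T *m u)) trmx_mul trmxK [in RHS]mxE. Qed.

Lemma qform_block m n (A : 'M[R]_m) (Bm : 'M[R]_(m,n)) (Cm : 'M[R]_(n,m)) (D : 'M[R]_n)
  (u : 'cV[R]_m) (v : 'cV[R]_n) :
  qform (block_mx A Bm Cm D) (col_mx u v) =
  qform A u + (u^T *m Bm *m v) 0 0 + (v^T *m Cm *m u) 0 0 + qform D v.
Proof.
rewrite /qform tr_col_mx mul_row_block mul_row_col !mulmxDl !mxE.
ring.
Qed.

Lemma e11 (X Y : 'M[R]_1) : (X *m Y) 0 0 = X 0 0 * Y 0 0.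
Proof. by rewrite mxE big_ord1. Qed.

Lemma tr11 (X : 'M[R]_1) : X^T 0 0 = X 0 0.
Proof. by rewrite mxE. Qed.

Lemma qform_Qb1 g (Q1 : 'M[R]_g) (r1 : 'cV[R]_g) (x : 'cV[R]_g) (t : 'cV[R]_1) :
  qform (block_mx Q1 r1 r1^T 1) (col_mx x t) =
  qform Q1 x + 2 * (t 0 0) * dot r1 x + t 0 0 ^+ 2.
Proof.
rewrite qform_block /qform mulmx1 e11 -mulmxA e11 tr11 -/(dot x r1) -/(dot r1 x) dotC.
rewrite -[t^T *m r1^T *m x]mulmxA e11 tr11 -/(dot r1 x). ring.
Qed.

Lemma add11 (X Y : 'M[R]_1) : (X + Y) 0 0 = X 0 0 + Y 0 0.
Proof. by rewrite mxE. Qed.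

Lemma qform_Qb2 g (Q2 : 'M[R]_g) (r2 : 'cV[R]_g) (x : 'cV[R]_g) (t : 'cV[R]_1) :
  qform (block_mx 1 r2^T r2 Q2) (col_mx t x) =
  t 0 0 ^+ 2 + 2 * (t 0 0) * dot r2 x + qform Q2 x.
Proof.
rewrite qform_block /qform mulmx1 e11 tr11.
rewrite -[t^T *m r2^T *m x]mulmxA e11 tr11 -/(dot r2 x).
rewrite mx11_mul -/(dot x r2) dotC. ring.
Qed.

Lemma qform_Qbar g1 g2 (Q1 : 'M[R]_g1) (r1 : 'cV[R]_g1) (Q2 : 'M[R]_g2) (r2 : 'cV[R]_g2)
  (x1 : 'cV[R]_g1) (t : 'cV[R]_1) (x2 : 'cV[R]_g2) :
  qform (block_mx (block_mx Q1 r1 r1^T 1) (col_mx (r1 *m r2^T) r2^T)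
                (row_mx (r2 *m r1^T) r2) Q2) (col_mx (col_mx x1 t) x2) =
  qform Q1 x1 + 2 * (t 0 0) * dot r1 x1 + t 0 0 ^+ 2 + 2 * t 0 0 * dot r2 x2
  + 2 * dot r1 x1 * dot r2 x2 + qform Q2 x2.
Proof.
rewrite qform_block qform_Qb1 tr_col_mx mul_row_col -[_ *m row_mx _ _ *m _]mulmxA mul_row_col.
rewrite mulmxDl mulmxDr !add11.
rewrite mulmxA -[x1^T *m r1 *m r2^T *m x2]mulmxA e11 -/(dot x1 r1) -/(dot r2 x2) dotC.
rewrite -[t^T *m r2^T *m x2]mulmxA e11 tr11 -/(dot r2 x2).
rewrite -[r2 *m r1^T *m x1]mulmxA mulmxA e11 -/(dot x2 r2) -/(dot r1 x1) (dotC x2).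
rewrite mulmxA mx11_mul -/(dot x2 r2) (dotC x2) (dotC x1). ring.
Qed.

Lemma int_to_real_col m1 m2 (u : 'cV[int]_m1) (v : 'cV[int]_m2) :
  int_to_real R (col_mx u v) = col_mx (int_to_real R u) (int_to_real R v).
Proof. by rewrite /int_to_real map_col_mx. Qed.

Lemma int_to_real0 m : int_to_real R (0 : 'cV[int]_m) = 0.
Proof. by apply/matrixP => i j; rewrite !mxE. Qed.

Lemma itr11 (t : 'cV[int]_1) : (int_to_real R t) 0 0 = (t 0 0)%:~R.
Proof. by rewrite mxE. Qed.

Lemma qform0 n (Q : 'M[R]_n) : qform Q 0 = 0.
Proof. by rewrite /qform mulmx0 mxE. Qed.

Lemma dot0 n (r : 'cV[R]_n) : dot r 0 = 0.
Proof. by rewrite /dot mulmx0 mxE. Qed.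

Lemma P1_pos g (Q1 : 'M[R]_g) (r1 : 'cV[R]_g) :
  (forall x : 'cV[R]_(g + 1), x != 0 -> 0 < qform (block_mx Q1 r1 r1^T 1) x) ->
  forall x, x != 0 -> 0 < qform Q1 x - dot r1 x ^+ 2.
Proof.
move=> H x nx.
have := H (col_mx x (const_mx (- dot r1 x))).
rewrite col_mx_eq0 (negbTE nx) qform_Qb1 mxE => /(_ isT).
set a := dot r1 x. set q := qform Q1 x. move=> h.
by rewrite (_ : q - a ^+ 2 = q + 2 * - a * a + (- a) ^+ 2) //; ring.
Qed.

Lemma P1_ge0 g (Q1 : 'M[R]_g) (r1 : 'cV[R]_g) :
  (forall x : 'cV[R]_(g + 1), x != 0 -> 0 < qform (block_mx Q1 r1 r1^T 1) x) ->
  forall x, 0 <= qform Q1 x - dot r1 x ^+ 2.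
Proof.
move=> H x; have [->|nx] := eqVneq x 0; first by rewrite qform0 dot0 expr0n subr0.
exact/ltW/(P1_pos H).
Qed.

Lemma P2_pos g (Q2 : 'M[R]_g) (r2 : 'cV[R]_g) :
  (forall x : 'cV[R]_(1 + g), x != 0 -> 0 < qform (block_mx 1 r2^T r2 Q2) x) ->
  forall x, x != 0 -> 0 < qform Q2 x - dot r2 x ^+ 2.
Proof.
move=> H x nx.
have := H (col_mx (const_mx (- dot r2 x)) x).
rewrite col_mx_eq0 (negbTE nx) andbF qform_Qb2 mxE => /(_ isT).
set a := dot r2 x. set q := qform Q2 x. move=> h.
by rewrite (_ : q - a ^+ 2 = (- a) ^+ 2 + 2 * - a * a + q) //; ring.
Qed.

Lemma P2_ge0 g (Q2 : 'M[R]_g) (r2 : 'cV[R]_g) :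
  (forall x : 'cV[R]_(1 + g), x != 0 -> 0 < qform (block_mx 1 r2^T r2 Q2) x) ->
  forall x, 0 <= qform Q2 x - dot r2 x ^+ 2.
Proof.
move=> H x; have [->|nx] := eqVneq x 0; first by rewrite qform0 dot0 expr0n subr0.
exact/ltW/(P2_pos H).
Qed.

Lemma sq_small (f : R) : 0 <= f <= 1/2 -> f ^+ 2 <= 1/4.
Proof.
move=> /andP [h0 h1].
have : f * f <= (1/2) * (1/2) by apply: ler_pM.
by rewrite expr2; lra.
Qed.

Lemma round_bound (P a : R) :
  (forall k : int, 1 <= P + (k%:~R + a) ^+ 2) -> 3/4 <= P.
Proof.
move=> H.
have := H (- Num.floor a); have := H (- Num.floor a - 1).
have := floor_itv a.
set m := Num.floor a => /andP [h1 h2].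
rewrite intrD in h2. rewrite intrB !intrN.
rewrite (_ : 1%:~R = 1) // in h2 *.
set f := a - m%:~R.
have f0 : 0 <= f by rewrite /f; lra.
have f1 : f < 1 by rewrite /f; lra.
have -> : (- m%:~R + a) = f by rewrite /f; ring.
have -> : (- m%:~R - 1 + a) = - (1 - f) by rewrite /f; ring.
rewrite sqrrN => e1 e2.
have [hl|hr] := lerP f (1/2).
  have := sq_small (f:=f); rewrite f0 hl => /(_ isT); lra.
have := sq_small (f:=1 - f).
have h0 : 0 <= 1 - f by lra.
have h1' : 1 - f <= 1/2 by lra.
rewrite h0 h1' => /(_ isT); lra.
Qed.

Lemma int_P1 g (Q1 : 'M[R]_g) (r1 : 'cV[R]_g) :
  (forall xi : 'cV[int]_(g + 1), xi != 0 ->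
     1 <= qform (block_mx Q1 r1 r1^T 1) (int_to_real R xi)) ->
  forall xi : 'cV[int]_g, xi != 0 ->
  3/4 <= qform Q1 (int_to_real R xi) - dot r1 (int_to_real R xi) ^+ 2.
Proof.
move=> H xi nxi; apply: (round_bound (a := dot r1 (int_to_real R xi))) => k.
have := H (col_mx xi (const_mx k)).
rewrite col_mx_eq0 (negbTE nxi) int_to_real_col qform_Qb1 itr11 mxE => /(_ isT).
set a := dot _ _. set q := qform _ _. move=> h.
by rewrite (_ : q - a ^+ 2 + (k%:~R + a) ^+ 2 = q + 2 * k%:~R * a + k%:~R ^+ 2) //; ring.
Qed.

Lemma int_P2 g (Q2 : 'M[R]_g) (r2 : 'cV[R]_g) :
  (forall xi : 'cV[int]_(1 + g), xi != 0 ->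
     1 <= qform (block_mx 1 r2^T r2 Q2) (int_to_real R xi)) ->
  forall xi : 'cV[int]_g, xi != 0 ->
  3/4 <= qform Q2 (int_to_real R xi) - dot r2 (int_to_real R xi) ^+ 2.
Proof.
move=> H xi nxi; apply: (round_bound (a := dot r2 (int_to_real R xi))) => k.
have := H (col_mx (const_mx k) xi).
rewrite col_mx_eq0 (negbTE nxi) andbF int_to_real_col qform_Qb2 itr11 mxE => /(_ isT).
set a := dot _ _. set q := qform _ _. move=> h.
by rewrite (_ : q - a ^+ 2 + (k%:~R + a) ^+ 2 = k%:~R ^+ 2 + 2 * k%:~R * a + q) //; ring.
Qed.
End Aux.

Lemma split3 (T : Type) m1 m2 m3 (P : 'cV[T]_(m1 + m2 + m3) -> Prop) :
  (forall x1 t x2, P (col_mx (col_mx x1 t) x2)) -> forall x, P x.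
Proof. by move=> H x; rewrite -(vsubmxK x) -(vsubmxK (usubmx x)). Qed.

Section Cols.
Variables (g1 n1 g2 n2 : nat) (B : 'M[int]_(g1, n1)) (b : 'cV[int]_n1)
  (C : 'M[int]_(g2, n2)) (c : 'cV[int]_n2).
Let A1 : 'M[int]_(g1 + 1, n1 + 1) := block_mx B 0 b^T 1.
Let A2 : 'M[int]_(1 + g2, n2 + 1) := block_mx c^T 1 C 0.
Let A : 'M[int]_(g1 + 1 + g2, n1 + n2 + 1) :=
    col_mx (col_mx (row_mx (row_mx B 0) 0) (row_mx (row_mx b^T c^T) 1))
           (row_mx (row_mx 0 C) 0).

Lemma colA1_l j1 : col (lshift 1 j1) A1 = col_mx (col j1 B) (col j1 b^T).
Proof. by rewrite /A1 block_mxEv col_col_mx !colKl. Qed.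
Lemma colA1_r k : col (rshift n1 k) A1 = col_mx 0 (col k 1).
Proof. by rewrite /A1 block_mxEv col_col_mx !colKr col0. Qed.
Lemma colA2_l j2 : col (lshift 1 j2) A2 = col_mx (col j2 c^T) (col j2 C).
Proof. by rewrite /A2 block_mxEv col_col_mx !colKl. Qed.
Lemma colA2_r k : col (rshift n2 k) A2 = col_mx (col k 1) 0.
Proof. by rewrite /A2 block_mxEv col_col_mx !colKr col0. Qed.
Lemma colA_l1 j1 : col (lshift 1 (lshift n2 j1)) A =
   col_mx (col_mx (col j1 B) (col j1 b^T)) 0.
Proof. by rewrite /A !col_col_mx !colKl !col0. Qed.
Lemma colA_l2 j2 : col (lshift 1 (rshift n1 j2)) A =
   col_mx (col_mx 0 (col j2 c^T)) (col j2 C).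
Proof. by rewrite /A !col_col_mx !colKl !colKr !col0. Qed.
Lemma colA_r k : col (rshift (n1 + n2) k) A = col_mx (col_mx 0 (col k 1)) 0.
Proof. by rewrite /A !col_col_mx !colKr !col0. Qed.

Lemma simpleA2_colC : simple_mx A2 -> forall j2, col j2 C != 0.
Proof.
move=> [_ h] j2; apply/negP => /eqP z.
apply: (h (lshift 1 j2) (rshift n2 0)); first by rewrite eq_lrshift.
exists ((c j2 0)%:~R).
rewrite colA2_l colA2_r z !map_col_mx scale_col_mx; congr col_mx.
  by apply/matrixP => i k; rewrite !ord1 !mxE eqxx mulr1.
by apply/matrixP => i k; rewrite !mxE mulr0.
Qed.
End Cols.

Theorem lemma4p2p4 (R : realType) (g1 n1 g2 n2 : nat)
  (B : 'M[int]_(g1, n1)) (b : 'cV[int]_n1)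
  (C : 'M[int]_(g2, n2)) (c : 'cV[int]_n2)
  (Qb1 : 'M[R]_(g1 + 1)) (Qb2 : 'M[R]_(1 + g2)) :
  let A1 : 'M[int]_(g1 + 1, n1 + 1) := block_mx B 0 b^T 1 in
  let A2 : 'M[int]_(1 + g2, n2 + 1) := block_mx c^T 1 C 0 in
  let A : 'M[int]_(g1 + 1 + g2, n1 + n2 + 1) :=
    col_mx (col_mx (row_mx (row_mx B 0) 0) (row_mx (row_mx b^T c^T) 1))
           (row_mx (row_mx 0 C) 0) in
  simple_mx A1 -> totally_unimodular A1 ->
  simple_mx A2 -> totally_unimodular A2 ->
  well_suited Qb1 A1 -> well_suited Qb2 A2 ->
  exists (Q1 : 'M[R]_g1) (r1 : 'cV[R]_g1) (Q2 : 'M[R]_g2) (r2 : 'cV[R]_g2),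
    Qb1 = block_mx Q1 r1 r1^T 1 /\
    Qb2 = block_mx 1 r2^T r2 Q2 /\
    well_suited
      (block_mx (block_mx Q1 r1 r1^T 1) (col_mx (r1 *m r2^T) r2^T)
                (row_mx (r2 *m r1^T) r2) Q2) A.
Proof.
move=> A1 A2 A sA1 _ sA2 _ [S1 [P1 I1]] [S2 [P2 I2]].
have c1nz : col (0 : 'I_1) (1 : 'M[int]_1) != 0.
  by apply/negP => /eqP/matrixP/(_ 0 0); rewrite !mxE.
set Q1 := ulsubmx Qb1. set r1 := ursubmx Qb1.
set Q2 := drsubmx Qb2. set r2 := dlsubmx Qb2.
have dl1 : dlsubmx Qb1 = r1^T by rewrite /r1 trmx_ursub S1.
have ur2 : ursubmx Qb2 = r2^T by rewrite /r2 trmx_dlsub S2.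
have sQ1 : Q1^T = Q1 by rewrite /Q1 trmx_ulsub S1.
have sQ2 : Q2^T = Q2 by rewrite /Q2 trmx_drsub S2.
have dr1 : drsubmx Qb1 = 1.
  have nz : col_mx 0 (col 0 1) != 0 :> 'cV[int]_(g1 + 1).
    by rewrite col_mx_eq0 negb_and c1nz orbT.
  have [_ h] := I1 _ nz.
  have := proj2 h (ex_intro _ (rshift n1 0) (or_introl (esym (colA1_r B b 0)))).
  move=> e; rewrite -[Qb1]submxK int_to_real_col int_to_real0 qform_block in e.
  move: e; rewrite /qform !trmx0 !mul0mx !mulmx0 !mxE ?add0r ?addr0 big_ord1 !mxE big_ord1 !mxE /=.
  rewrite (_ : (1%:~R : R) = 1) // mulr1 mul1r => e.
  by apply/matrixP => i j; rewrite !ord1 !mxE e.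
have ul2 : ulsubmx Qb2 = 1.
  have nz : col_mx (col 0 1) 0 != 0 :> 'cV[int]_(1 + g2).
    by rewrite col_mx_eq0 negb_and c1nz.
  have [_ h] := I2 _ nz.
  have := proj2 h (ex_intro _ (rshift n2 0) (or_introl (esym (colA2_r C c 0)))).
  move=> e; rewrite -[Qb2]submxK int_to_real_col int_to_real0 qform_block in e.
  move: e; rewrite /qform !trmx0 !mul0mx !mulmx0 !mxE ?add0r ?addr0 big_ord1 !mxE big_ord1 !mxE /=.
  rewrite (_ : (1%:~R : R) = 1) // mulr1 mul1r => e.
  by apply/matrixP => i j; rewrite !ord1 !mxE e.
have e1 : Qb1 = block_mx Q1 r1 r1^T 1 by rewrite -dl1 -dr1 submxK.
have e2 : Qb2 = block_mx 1 r2^T r2 Q2 by rewrite -ul2 -ur2 submxK.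
exists Q1, r1, Q2, r2; split; first exact: e1.
split; first exact: e2.
rewrite e1 in P1 I1; rewrite e2 in P2 I2.
split.
  by rewrite !tr_block_mx tr_col_mx tr_row_mx !trmx_mul !trmxK trmx1 sQ1 sQ2.
split.
  move=> x; rewrite -(vsubmxK x) -(vsubmxK (usubmx x)).
  move: (usubmx (usubmx x)) (dsubmx (usubmx x)) (dsubmx x) => x1 t x2 nx.
  have h1 := P1_ge0 P1 x1; have h2 := P2_ge0 P2 x2.
  have [z1|n1'] := eqVneq x1 0; last first.
    have h4 := P1_pos P1 n1'.
    rewrite qform_Qbar; set a := dot r1 x1 in h1 h4 *; set be := dot r2 x2 in h2 h4 *; set s : R := t 0 0.
    have h3 := sqr_ge0 (s + a + be).
    have -> : qform Q1 x1 + 2 * s * a + s ^+ 2 + 2 * s * be + 2 * a * be + qform Q2 x2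
     = (qform Q1 x1 - a ^+ 2) + (qform Q2 x2 - be ^+ 2) + (s + a + be) ^+ 2 by ring.
    lra.
  have [z2|n2'] := eqVneq x2 0; last first.
    have h4 := P2_pos P2 n2'.
    rewrite qform_Qbar; set a := dot r1 x1 in h1 h4 *; set be := dot r2 x2 in h2 h4 *; set s : R := t 0 0.
    have h3 := sqr_ge0 (s + a + be).
    have -> : qform Q1 x1 + 2 * s * a + s ^+ 2 + 2 * s * be + 2 * a * be + qform Q2 x2
     = (qform Q1 x1 - a ^+ 2) + (qform Q2 x2 - be ^+ 2) + (s + a + be) ^+ 2 by ring.
    lra.
  rewrite qform_Qbar; set a := dot r1 x1; set be := dot r2 x2; set s : R := t 0 0.
  have -> : qform Q1 x1 + 2 * s * a + s ^+ 2 + 2 * s * be + 2 * a * be + qform Q2 x2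
     = (qform Q1 x1 - a ^+ 2) + (qform Q2 x2 - be ^+ 2) + (s + a + be) ^+ 2 by ring.
  move: nx; rewrite /a /be z1 z2 !qform0 !dot0 !col_mx_eq0 !eqxx /= andbT => nt.
  have ns : s != 0.
    apply: contra nt => /eqP hs; apply/eqP/matrixP => i j.
    by rewrite !ord1 mxE; apply: hs.
  have h : s ^+ 2 != 0 by rewrite expf_eq0 (negbTE ns) andbF.
  have h' : 0 < s ^+ 2 by rewrite lt_def h sqr_ge0.
  have z : (0:R) ^+ 2 = 0 by rewrite expr2 mulr0.
  rewrite z !addr0; lra.
have I1' := fun xi h => proj1 (I1 xi h).
have I2' := fun xi h => proj1 (I2 xi h).
have cC := simpleA2_colC sA2.
move=> xi; rewrite -(vsubmxK xi) -(vsubmxK (usubmx xi)).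
move: (usubmx (usubmx xi)) (dsubmx (usubmx xi)) (dsubmx xi) => x1 t x2 nx.
rewrite !int_to_real_col.
have [z2|nz2] := eqVneq x2 0.
  subst x2; rewrite int_to_real0 qform_Qbar qform0 dot0.
  have nx' : col_mx x1 t != 0 by move: nx; rewrite col_mx_eq0 eqxx andbT.
  have [ge iff1] := I1 _ nx'.
  rewrite int_to_real_col qform_Qb1 in ge iff1.
  rewrite !mulr0 !addr0; split; first exact: ge.
  rewrite iff1; split.
    move=> [j e]; move: e; rewrite -[j]splitK; case: (split j) => [j1|k] /=.
      rewrite colA1_l => e; exists (lshift 1 (lshift n2 j1)); rewrite /A colA_l1.
      by case: e => e; [left; rewrite e|right; rewrite opp_col_mx oppr0 e].
    rewrite colA1_r => e; exists (rshift (n1 + n2) k); rewrite /A colA_r.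
    by case: e => e; [left; rewrite e|right; rewrite opp_col_mx oppr0 e].
  move=> [j e]; move: e; rewrite -[j]splitK; case: (split j) => [j'|k] /=.
    rewrite -[j']splitK; case: (split j') => [j1|j2] /=.
      rewrite /A colA_l1 => e; exists (lshift 1 j1); rewrite colA1_l.
      case: e; rewrite ?opp_col_mx => /eq_col_mx [e _]; [left|right]; exact: e.
    rewrite /A colA_l2 => e; exfalso.
    case: e; rewrite ?opp_col_mx => /eq_col_mx [_ e]; move: (cC j2);
      by rewrite -e ?oppr0 eqxx.
  rewrite /A colA_r => e; exists (rshift n1 k); rewrite colA1_r.
  case: e; rewrite ?opp_col_mx => /eq_col_mx [e _]; [left|right]; exact: e.
have [z1|nz1] := eqVneq x1 0.
  subst x1; rewrite int_to_real0 qform_Qbar qform0 dot0.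
  have nx' : col_mx t x2 != 0 by rewrite col_mx_eq0 negb_and nz2 orbT.
  have [ge iff2] := I2 _ nx'.
  rewrite int_to_real_col qform_Qb2 in ge iff2.
  set s : R := _ 0 0; set be := dot r2 _; set q2 := qform Q2 _.
  have -> : 0 + 2 * s * 0 + s ^+ 2 + 2 * s * be + 2 * 0 * be + q2 = s ^+ 2 + 2 * s * be + q2 by ring.
  split; first exact: ge.
  rewrite iff2; split.
    move=> [j e]; move: e; rewrite -[j]splitK; case: (split j) => [j2|k] /=.
      rewrite colA2_l => e; exists (lshift 1 (rshift n1 j2)); rewrite /A colA_l2.
      case: e; rewrite ?opp_col_mx => /eq_col_mx [-> ->]; [left|right];
        by rewrite ?opp_col_mx ?oppr0.
    rewrite colA2_r => e; exists (rshift (n1 + n2) k); rewrite /A colA_r.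
    case: e; rewrite ?opp_col_mx => /eq_col_mx [-> ->]; [left|right];
      by rewrite ?opp_col_mx ?oppr0.
  move=> [j e]; move: e; rewrite -[j]splitK; case: (split j) => [j'|k] /=.
    rewrite -[j']splitK; case: (split j') => [j1|j2] /=.
      rewrite /A colA_l1 => e; exfalso.
      by case: e; rewrite ?opp_col_mx => /eq_col_mx [_ e]; move: nz2; rewrite -[x2]opprK e ?oppr0 eqxx.
    rewrite /A colA_l2 => e; exists (lshift 1 j2); rewrite colA2_l.
    case: e; rewrite ?opp_col_mx => /eq_col_mx [/eq_col_mx [_ ->] ->]; [left|right];
      by rewrite ?opp_col_mx.
  rewrite /A colA_r => e; exists (rshift n2 k); rewrite colA2_r.
  case: e; rewrite ?opp_col_mx => /eq_col_mx [/eq_col_mx [_ ->] ->]; [left|right];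
    by rewrite ?opp_col_mx.
have hgt : 1 < qform (block_mx (block_mx Q1 r1 r1^T 1) (col_mx (r1 *m r2^T) r2^T)
       (row_mx (r2 *m r1^T) r2) Q2)
    (col_mx (col_mx (int_to_real R x1) (int_to_real R t)) (int_to_real R x2)).
  rewrite qform_Qbar.
  set a := dot r1 _; set be := dot r2 _; set s := _ 0 0.
  have h1 := int_P1 I1' nz1; have h2 := int_P2 I2' nz2.
  rewrite -/a -/be in h1 h2.
  have h3 := sqr_ge0 (s + a + be).
  have -> : qform Q1 (int_to_real R x1) + 2 * s * a + s ^+ 2 + 2 * s * be + 2 * a * be
      + qform Q2 (int_to_real R x2)
     = (qform Q1 (int_to_real R x1) - a ^+ 2) + (qform Q2 (int_to_real R x2) - be ^+ 2)
       + (s + a + be) ^+ 2 by ring.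
  lra.
split; first exact: ltW.
split; first by move=> e; move: hgt; rewrite e ltxx.
move=> [j e]; exfalso; move: e; rewrite -[j]splitK; case: (split j) => [j'|k] /=.
  rewrite -[j']splitK; case: (split j') => [j1|j2] /=.
    rewrite /A colA_l1 => e.
    by case: e; rewrite ?opp_col_mx => /eq_col_mx [_ e]; move: nz2; rewrite -[x2]opprK e ?oppr0 eqxx.
  rewrite /A colA_l2 => e.
  by case: e; rewrite ?opp_col_mx => /eq_col_mx [/eq_col_mx [e _] _];
    move: nz1; rewrite -[x1]opprK e ?oppr0 eqxx.
rewrite /A colA_r => e.
by case: e; rewrite ?opp_col_mx => /eq_col_mx [_ e]; move: nz2; rewrite -[x2]opprK e ?oppr0 eqxx.
Qed.
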